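(* Let $\mathcal H=\mathbb C^2$ with orthonormal basis $e_1,e_2$. For a selfadjoint unitary $\eta$ on $\mathcal H$ let $\mathcal B(\eta)$ be the unital algebra of operators on the Fermi–Fock space $\mathcal F_-(\mathbb C^2)$ generated by $a_-(e_i)$ and $a_-^\dagger(e_i):=\Gamma(\eta)a_-^*(e_i)\Gamma(\eta)$, $i=1,2$, with involution $x\mapsto x^\dagger:=\Gamma(\eta)x^*\Gamma(\eta)$ ($x^*$ the Hilbert-space adjoint). Then the involutive algebras $(\mathcal B(I),\dagger)$ and $(\mathcal B(-I),\dagger)$ are not involutively isomorphic.
   Context: An involutive algebra is a complex algebra with a conjugate-linear antimultiplicative map $\varphi$ with $\varphi^2=\mathrm{id}$; an involutive isomorphism is an algebra isomorphism $F$ with $F(\varphi(x))=\psi(F(x))$. $\mathcal F_-(\mathbb C^2)$ is the antisymmetric Fock space over $\mathbb C^2$ (dimension 4), $a_-(f),a_-^*(f)$ are the usual Fermi annihilation/creation operators satisfying $a_-(f)a_-^*(g)+a_-^*(g)a_-(f)=\langle f|g\rangle I$, and $\Gamma(\eta)=I\oplus\eta\oplus\eta^{\otimes2}\oplus\cdots$ restricted to $\mathcal F_-$. For $\eta=-I$ the generators satisfy $a_-(f)a_-^\dagger(g)+a_-^\dagger(g)a_-(f)=-\langle f|g\rangle I$. *)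

(* Defs.v *)
From HB Require Import structures.
From mathcomp Require Import all_boot all_order all_algebra.
From mathcomp Require Import complex.
From mathcomp Require Import reals.
Set Implicit Arguments. Unset Strict Implicit. Unset Printing Implicit Defensive.
Import Order.TTheory GRing.Theory Num.Theory.
Local Open Scope ring_scope.

(* One-particle space H = C^2 with orthonormal basis e_0, e_1 (indices 'I_2).
   Antisymmetric Fock space F_-(C^2): orthonormal basis e_S, S a subset of
   'I_2, where e_S = e_{s_1} /\ ... /\ e_{s_k} with s_1 < ... < s_k
   (e_emptyset = vacuum).  It has dimension #|{set 'I_2}| = 4.  Operators on
   F_-(C^2) are square matrices in that basis; the basis vector with index
   p : 'I_fdim is e_(fS p). *)
Definition fdim : nat := #|{set 'I_2}|.
Definition fS (p : 'I_fdim) : {set 'I_2} := enum_val p.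

Section Fock.
Variable R : realType.
Local Notation C := (R[i]).

Definition adjmx (n : nat) (A : 'M[C]_n) : 'M[C]_n := \matrix_(i, j) (A j i)^*.

(* Creation operator a_-^*(e_i):
   a^*(e_i) e_S = (-1)^{#{j in S | j < i}} e_{S u {i}} if i notin S, else 0. *)
Definition cre (i : 'I_2) : 'M[C]_fdim :=
  \matrix_(p, q)
    if (i \notin fS q) && (fS p == i |: fS q)
    then (-1) ^+ #|[set j in fS q | (j < i)%N]| else 0.

Definition ann (i : 'I_2) : 'M[C]_fdim := adjmx (cre i).

(* Second quantization Gamma(eta) restricted to F_-(C^2):
   Gamma(eta) e_S = (eta e_{s_1}) /\ ... /\ (eta e_{s_k}), whose coefficient on
   e_T is the minor det(eta_{T,S}) when #|T| = #|S| (and 0 otherwise). *)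
Definition Gamma (eta : 'M[C]_2) : 'M[C]_fdim :=
  \matrix_(p, q)
    if #|fS p| == #|fS q| then
      \det (\matrix_(a < #|fS p|, b < #|fS p|)
               eta (nth ord0 (enum (fS p)) a) (nth ord0 (enum (fS q)) b))
    else 0.

Definition dag (eta : 'M[C]_2) (x : 'M[C]_fdim) : 'M[C]_fdim :=
  Gamma eta *m adjmx x *m Gamma eta.

Definition cre_dag (eta : 'M[C]_2) (i : 'I_2) : 'M[C]_fdim :=
  Gamma eta *m cre i *m Gamma eta.

Inductive inB (eta : 'M[C]_2) : 'M[C]_fdim -> Prop :=
  | inB_one : inB eta 1%:M
  | inB_ann i : inB eta (ann i)
  | inB_cre i : inB eta (cre_dag eta i)
  | inB_add x y : inB eta x -> inB eta y -> inB eta (x + y)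
  | inB_scale (c : C) x : inB eta x -> inB eta (c *: x)
  | inB_mul x y : inB eta x -> inB eta y -> inB eta (x *m y).

Definition invol_iso (eta1 eta2 : 'M[C]_2) (F : 'M[C]_fdim -> 'M[C]_fdim) : Prop :=
  (forall x, inB eta1 x -> inB eta2 (F x)) /\
  (forall x y, inB eta1 x -> inB eta1 y -> F x = F y -> x = y) /\
  (forall y, inB eta2 y -> exists2 x, inB eta1 x & F x = y) /\
  (forall x y, inB eta1 x -> inB eta1 y -> F (x + y) = F x + F y) /\
  (forall (c : C) x, inB eta1 x -> F (c *: x) = c *: F x) /\
  (forall x y, inB eta1 x -> inB eta1 y -> F (x *m y) = F x *m F y) /\
  (forall x, inB eta1 x -> F (dag eta1 x) = dag eta2 (F x)).

End Fock.

(* Main.v *)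
Require Import Defs.
From HB Require Import structures.
From mathcomp Require Import all_boot all_order all_algebra.
From mathcomp Require Import complex.
From mathcomp Require Import reals.
Import GRing.Theory Num.Theory.
Local Open Scope ring_scope.

Section Aux.
Variable R : realType.
Local Notation C := (R[i]).
Local Notation M := ('M[C]_fdim).

Lemma adjmxD (A B : M) : adjmx (A + B) = adjmx A + adjmx B.
Proof. by apply/matrixP => i j; rewrite !mxE rmorphD. Qed.

Lemma adjmxK (A : M) : adjmx (adjmx A) = A.
Proof. by apply/matrixP => i j; rewrite !mxE conjCK. Qed.

Lemma adjmxM (A B : M) : adjmx (A *m B) = adjmx B *m adjmx A.
Proof.
apply/matrixP => i j; rewrite !mxE rmorph_sum; apply: eq_bigr => k _.
by rewrite !mxE rmorphM mulrC.
Qed.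

Lemma adjmxZ (c : C) (A : M) : adjmx (c *: A) = c^* *: adjmx A.
Proof. by apply/matrixP => i j; rewrite !mxE rmorphM. Qed.

Lemma adjmx1 : adjmx (1%:M : M) = 1%:M.
Proof.
apply/matrixP => i j; rewrite !mxE eq_sym.
by rewrite conjC_nat.
Qed.

Lemma adjmx_pos (x : M) : adjmx x *m x = 0 -> x = 0.
Proof.
move=> H; apply/matrixP => k j.
have := congr1 (fun A : M => A j j) H; rewrite !mxE => Hs.
have Hk := @psumr_eq0P _ _ predT (fun k => (x k j)^* * x k j) _ _ k isT.
apply/eqP; rewrite -mul_conjC_eq0 mulrC Hk //.
- by move=> i _; rewrite -normCKC exprn_ge0.
- by rewrite -[RHS]Hs; apply: eq_bigr => i _; rewrite !mxE.
Qed.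

Lemma Gamma_scalar (k : C) :
  Gamma (k%:M : 'M[C]_2) = diag_mx (\row_p k ^+ #|fS p|).
Proof.
apply/matrixP => p q; rewrite !mxE.
have [<-|npq] := eqVneq p q.
  rewrite eqxx mulr1n.
  rewrite (_ : \matrix_(a, b) _ = (k%:M : 'M_#|fS p|)) ?det_scalar //.
  apply/matrixP => a b; rewrite !mxE nth_uniq ?enum_uniq // -?cardE //.
rewrite mulr0n; case: eqP => // Hc.
have neST : fS p != fS q.
  by apply/eqP => /enum_val_inj E; rewrite E eqxx in npq.
have : ~~ (fS p \subset fS q).
  by apply: contra neST => sub; rewrite eqEcard sub Hc leqnn.
case/subsetPn => s sS snT.
have ha : (index s (enum (fS p)) < #|fS p|)%N by rewrite cardE index_mem mem_enum.
rewrite (expand_det_row _ (Ordinal ha)) big1 // => b _.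
rewrite !mxE /= nth_index ?mem_enum //.
case: eqP => [Es|]; last by rewrite mulr0n mul0r.
have : nth ord0 (enum (fS q)) b \in fS q.
  by rewrite -mem_enum mem_nth // -cardE -Hc.
by rewrite -Es (negPf snT).
Qed.


Definition Psg : M := diag_mx (\row_p (-1) ^+ #|fS p|).

Lemma sign_sq (n : nat) : (-1) ^+ n * (-1) ^+ n = 1 :> C.
Proof. by rewrite -exprD addnn -mul2n exprM expr2 mulN1r opprK expr1n. Qed.

Lemma PsgP (A : M) :
  (forall p q, A p q != 0 -> #|fS p| = (#|fS q|).+1 \/ #|fS q| = (#|fS p|).+1) ->
  Psg *m A *m Psg = - A.
Proof.
move=> HA; rewrite /Psg mul_diag_mx mul_mx_diag; apply/matrixP => p q.
rewrite !mxE.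
have [->|nz] := eqVneq (A p q) 0; first by rewrite mulr0 mul0r oppr0.
case: (HA p q nz) => ->; rewrite exprS.
- by rewrite mulN1r !mulNr -mulrA [A p q * _]mulrC mulrA sign_sq mul1r.
- by rewrite mulN1r mulrN -mulrA [A p q * _]mulrC mulrA sign_sq mul1r.
Qed.

Lemma PsgK : Psg *m Psg = 1%:M.
Proof.
rewrite /Psg mulmx_diag; apply/matrixP => p q; rewrite !mxE sign_sq.
by [].
Qed.

Lemma creE (i : 'I_2) p q : cre R i p q =
  if (i \notin fS q) && (fS p == i |: fS q)
    then (-1) ^+ #|[set j in fS q | (j < i)%N]| else 0.
Proof. by rewrite mxE. Qed.

Lemma cre_nz (i : 'I_2) p q : cre R i p q != 0 ->
  (i \notin fS q) /\ fS p = i |: fS q.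
Proof. by rewrite creE; case: ifP => [/andP[? /eqP ?]|]; rewrite ?eqxx. Qed.

Lemma cre_card (i : 'I_2) p q : cre R i p q != 0 -> #|fS p| = (#|fS q|).+1.
Proof. by case/cre_nz => ni ->; rewrite cardsU1 ni. Qed.

Lemma Psg_cre i : Psg *m cre R i *m Psg = - cre R i.
Proof. by apply: PsgP => p q /cre_card; left. Qed.

Lemma Psg_ann i : Psg *m ann R i *m Psg = - ann R i.
Proof.
by apply: PsgP => p q; rewrite mxE conjC_eq0 => /cre_card H; right.
Qed.

Lemma cre_cre i : cre R i *m cre R i = 0.
Proof.
apply/matrixP => p q; rewrite !mxE; apply: big1 => r _.
have [->|/cre_nz [ni E]] := eqVneq (cre R i r q) 0; first by rewrite mulr0.
rewrite creE E setU11 /= mul0r //.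
Qed.

Lemma cre_ann i : cre R i *m ann R i = diag_mx (\row_p (i \in fS p)%:R).
Proof.
apply/matrixP => p q; rewrite !mxE.
have H0 r q' : cre R i p r * (ann R i) r q' != 0 ->
    [/\ p = q', fS r = fS p :\ i & i \in fS p].
  rewrite /ann [adjmx _ r q']mxE mulf_eq0 negb_or conjC_eq0.
  move=> /andP[/cre_nz[n1 E1] /cre_nz[n2 E2]].
  split; first by apply: enum_val_inj; rewrite /fS in E1 E2; rewrite E1 E2.
    by rewrite E1 setU1K.
  by rewrite E1 setU11.
have [<-|npq] := eqVneq p q; last first.
  rewrite mulr0n; apply: big1 => r _; apply/eqP; apply: contraNT npq => /H0[-> _].
  by rewrite eqxx.
rewrite mulr1n.
have [ip|nip] := boolP (i \in fS p); last first.
  by apply: big1 => r _; apply/eqP; apply: contraNT nip => /H0[].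
pose r0 : 'I_fdim := enum_rank (fS p :\ i).
have fr0 : fS r0 = fS p :\ i by rewrite /fS enum_rankK.
rewrite (bigD1 r0) //= big1 ?addr0; last first.
  move=> r nr; apply/eqP; apply: contraNT nr => /H0[_ E _].
  by apply/eqP; apply: enum_val_inj; rewrite -/(fS r) -/(fS r0) E fr0.
rewrite /ann [adjmx _ r0 p]mxE -normCK creE fr0 !inE eqxx /= setD1K //.
by rewrite eqxx normrX normrN1 !expr1n.
Qed.

Lemma cre_ann_cre i : cre R i *m ann R i *m cre R i = cre R i.
Proof.
rewrite cre_ann mul_diag_mx; apply/matrixP => p q; rewrite mxE [X in X * _]mxE.
have [->|/cre_nz[_ E]] := eqVneq (cre R i p q) 0; first by rewrite mulr0.
by rewrite E setU11 mul1r.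
Qed.

Lemma ann_cre_ann i : ann R i *m cre R i *m ann R i = ann R i.
Proof. by rewrite /ann -{2}(adjmxK (cre R i)) -!adjmxM mulmxA cre_ann_cre. Qed.

Lemma ann_ann i : ann R i *m ann R i = 0.
Proof.
rewrite /ann -adjmxM cre_cre; apply/matrixP => p q; rewrite !mxE.
by rewrite conjC0.
Qed.

Lemma cre_neq0 i : cre R i != 0.
Proof.
apply/negP => /eqP H.
have := congr1 (fun A : M => A (enum_rank [set i]) (enum_rank set0)) H.
rewrite creE /fS !enum_rankK inE setU0 eqxx /= mxE.
rewrite (_ : [set j in set0 | _] = set0); last by apply/setP => j; rewrite !inE.
by rewrite cards0 expr0 => /eqP; rewrite oner_eq0.
Qed.

Lemma Gamma1 : Gamma (1%:M : 'M[C]_2) = 1%:M.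
Proof.
rewrite Gamma_scalar; apply/matrixP => p q; rewrite !mxE expr1n.
by [].
Qed.

Lemma GammaN1 : Gamma (- 1%:M : 'M[C]_2) = Psg.
Proof.
rewrite (_ : - 1%:M = (-1)%:M) ?Gamma_scalar //.
by apply/matrixP => p q; rewrite !mxE mulNrn.
Qed.

Lemma dag1 x : dag (1%:M : 'M[C]_2) x = adjmx x.
Proof. by rewrite /dag Gamma1 mulmx1 mul1mx. Qed.

Lemma dagN1 x : dag (- 1%:M : 'M[C]_2) x = Psg *m adjmx x *m Psg.
Proof. by rewrite /dag GammaN1. Qed.

Lemma cre_dag1 i : cre_dag (1%:M : 'M[C]_2) i = cre R i.
Proof. by rewrite /cre_dag Gamma1 mulmx1 mul1mx. Qed.

Lemma cre_dagN1 i : cre_dag (- 1%:M : 'M[C]_2) i = - cre R i.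
Proof. by rewrite /cre_dag GammaN1 Psg_cre. Qed.

Lemma inB1_adj x : inB (1%:M : 'M[C]_2) x -> inB (1%:M : 'M[C]_2) (adjmx x).
Proof.
elim=> [|i|i|y z _ Hy _ Hz|c y _ Hy|y z _ Hy _ Hz].
- by rewrite adjmx1; exact: inB_one.
- by rewrite /ann adjmxK -cre_dag1; exact: inB_cre.
- by rewrite cre_dag1; exact: inB_ann.
- by rewrite adjmxD; exact: inB_add.
- by rewrite adjmxZ; exact: inB_scale.
- by rewrite adjmxM; exact: inB_mul.
Qed.

Definition yy : M := ann R ord0 + cre R ord0 *m ann R ord0.

Lemma yy_neq0 : yy != 0.
Proof.
apply/negP => /eqP H.
have : ann R ord0 *m yy = 0 by rewrite H mulmx0.
rewrite /yy mulmxDr ann_ann add0r mulmxA ann_cre_ann => Ha.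
have := cre_neq0 ord0; rewrite -(adjmxK (cre R ord0)) -/(ann R ord0) Ha.
rewrite (_ : adjmx 0 = 0) ?eqxx //.
by apply/matrixP => p q; rewrite !mxE conjC0.
Qed.

Lemma yy_inB : inB (- 1%:M : 'M[C]_2) yy.
Proof.
have -> : yy = ann R ord0 + (-1) *: (cre_dag (- 1%:M : 'M[C]_2) ord0 *m ann R ord0).
  by rewrite cre_dagN1 mulNmx scaleN1r opprK.
by apply: inB_add; [exact: inB_ann | apply: inB_scale; apply: inB_mul;
  [exact: inB_cre | exact: inB_ann]].
Qed.

Lemma yy_null : dag (- 1%:M : 'M[C]_2) yy *m yy = 0.
Proof.
set c := cre R ord0; set a := ann R ord0.
have Ha : adjmx a = c by rewrite /a /ann adjmxK.
have E1 : dag (- 1%:M : 'M[C]_2) yy = - c + c *m a.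
  rewrite dagN1 /yy -/a -/c adjmxD adjmxM Ha (_ : adjmx c = a) //.
  rewrite mulmxDr mulmxDl Psg_cre; congr (_ + _).
  have -> : Psg *m (c *m a) *m Psg = (Psg *m c *m Psg) *m (Psg *m a *m Psg).
    by rewrite !mulmxA -(mulmxA _ Psg Psg) PsgK mulmx1.
  by rewrite Psg_cre Psg_ann mulNmx mulmxN opprK.
rewrite E1 /yy -/a -/c mulmxDl !mulmxDr.
have -> : - c *m (c *m a) = 0 by rewrite mulNmx mulmxA cre_cre mul0mx oppr0.
have -> : c *m a *m a = 0 by rewrite -mulmxA ann_ann mulmx0.
have -> : c *m a *m (c *m a) = c *m a by rewrite mulmxA cre_ann_cre.
by rewrite mulNmx addr0 add0r addNr.
Qed.

End Aux.

Theorem mainTheorem6 (R : realType) :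
  ~ exists F : 'M[R[i]]_fdim -> 'M[R[i]]_fdim,
      invol_iso (1%:M : 'M[R[i]]_2) (- 1%:M) F.
Proof.
move=> [F [Fin [Finj [Fsurj [FD [FZ [FM Fdag]]]]]]].
have [x xB Fx] := Fsurj _ (yy_inB R).
have B0 : inB (1%:M : 'M[R[i]]_2) 0.
  by rewrite -(scale0r (1%:M : 'M[R[i]]_fdim)); apply: inB_scale; exact: inB_one.
have F0 : F 0 = 0.
  have := FZ 0 _ (inB_one (1%:M : 'M[R[i]]_2)); rewrite !scale0r; exact.
have xa := @inB1_adj R x xB.
have H : F (adjmx x *m x) = F 0.
  by rewrite FM // -dag1 Fdag // Fx yy_null F0.
have := Finj _ _ (inB_mul xa xB) B0 H => /adjmx_pos x0.
by move: (yy_neq0 R); rewrite -Fx x0 F0 eqxx.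
Qed.
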